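(* Fix integers $m\ge d\ge1$, $\lambda=d/m$, let $p$ be a monic polynomial of degree $d$ with nonnegative real roots, and let $\sigma^2>0$. The following are equivalent: (1) $T^{(m,d)}_{\mathbb{S}p}$ is constant equal to $\sigma^2$, i.e. $t_1=\dots=t_d=\sigma^2$; (2) $\mathcal R^{d,\lambda}_{\mathbb{S}p}(s)=m\sigma^2s$; (3) $p$ has the same roots as $L_d^{(m-d)}(x/\sigma^2)$.
   Context: Write $p=\sum_{i=0}^d(-1)^ip_ix^{d-i}$. The rectangular $T$-transform $T^{(m,d)}_{\mathbb{S}p}$ is the multiset of complex numbers $t_1,\dots,t_d$ (viewed as a uniformly distributed random variable) determined by $\frac1d\sum_jt_j^i=\frac{i!(m-i)!(d-i)!}{m!d!}p_i$ for $i=1,\dots,d$; equivalently $\frac1d\sum_je^{-t_j\partial_x\partial_y}\{y^mx^d\}=y^{m-d}p(xy)$. Finite $R$-transform: with $E_p(s)=\sum_{i=0}^d(-1)^i(md)^i\frac{(m-i)!(d-i)!}{m!d!}p_is^i$, $\mathcal R^{d,\lambda}_{\mathbb{S}p}(s)$ is the polynomial of degree $\le d$ agreeing with $-\frac sd\frac d{ds}\log E_p(s)$ mod $s^{d+1}$. $L_d^{(\alpha)}(x)=\sum_{i=0}^d\binom{d+\alpha}{d-i}\frac{(-x)^i}{i!}$. *)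

(* Defs.v *)
(* Coefficients in an arbitrary numeric closed field C
   (e.g. algC or complex R), playing the role of the complex numbers. *)
From HB Require Import structures.
From mathcomp Require Import all_boot all_order all_algebra.
Set Implicit Arguments. Unset Strict Implicit. Unset Printing Implicit Defensive.
Import Order.TTheory GRing.Theory Num.Theory.
Local Open Scope ring_scope.

Section Defs.
Variable C : numClosedFieldType.

(* p = \sum_{i=0}^d (-1)^i p_i x^{d-i}, so p_i = (-1)^i * (coefficient of x^{d-i}) *)
Definition pcoef (d : nat) (p : {poly C}) (i : nat) : C :=
  (-1) ^+ i * p`_(d - i).

(* t (a multiset of size d, given as a sequence) is the rectangular
   T-transform T^{(m,d)}_{S p}: it satisfies the defining power-sum equations
   (1/d) sum_j t_j^i = i!(m-i)!(d-i)!/(m!d!) p_i for i = 1..d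
   (these determine the multiset uniquely). *)
Definition is_T_transform (m d : nat) (p : {poly C}) (t : seq C) : Prop :=
  size t = d /\
  forall i : nat, (1 <= i <= d)%N ->
    d%:R^-1 * \sum_(x <- t) x ^+ i
    = (i`! * (m - i)`! * (d - i)`!)%:R / (m`! * d`!)%:R * pcoef d p i.

Definition Epoly (m d : nat) (p : {poly C}) : {poly C} :=
  \sum_(i < d.+1)
    ((-1) ^+ i * ((m * d) ^ i)%:R * ((m - i)`! * (d - i)`!)%:R
      / (m`! * d`!)%:R * pcoef d p i) *: 'X^i.

(* Rp is the finite R-transform R^{d,lambda}_{S p}: a polynomial of degree
   <= d agreeing with -(s/d) E_p'(s)/E_p(s) modulo s^{d+1}; since E_p(0)=1,
   this is equivalent to  Rp * E_p + (1/d) s E_p'  = 0  mod s^{d+1}. *)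
Definition is_finite_R (m d : nat) (p : {poly C}) (Rp : {poly C}) : Prop :=
  (size Rp <= d.+1)%N /\
  forall k : nat, (k <= d)%N ->
    (Rp * Epoly m d p + d%:R^-1 *: ('X * (Epoly m d p)^`()))`_k = 0.

Definition laguerre (d alpha : nat) : {poly C} :=
  \sum_(i < d.+1) ('C(d + alpha, d - i)%:R * (-1) ^+ i / (i`!)%:R) *: 'X^i.

End Defs.

(* Main.v *)
Require Import Defs.
From HB Require Import structures.
From mathcomp Require Import all_boot all_order all_algebra all_field.
From mathcomp Require Import ring zify.
Import Order.TTheory GRing.Theory Num.Theory.
Local Open Scope ring_scope.

Lemma key_nat (m d k : nat) : (k <= m)%N ->
  (k`! * (m-k)`! * (d-k)`! * ('C(m,k) * d`!) = (m`!*d`!) * (d-k)`!)%N.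
Proof. move=> h; rewrite -(bin_fact h); ring. Qed.

Definition cc (C : numClosedFieldType) (m d : nat) (s : C) (k : nat) : C :=
  s ^+ k * ('C(m,k) * d`!)%:R / ((d-k)`!)%:R.
Arguments cc {C}.

Lemma natr_neq0 (C : numClosedFieldType) (n : nat) : (0 < n)%N -> n%:R != 0 :> C.
Proof. by move=> h; rewrite pnatr_eq0 -lt0n. Qed.

Lemma fact_neq0 (C : numClosedFieldType) (n : nat) : (n`!)%:R != 0 :> C.
Proof. exact/natr_neq0/fact_gt0. Qed.

Lemma gcc (C : numClosedFieldType) (m d : nat) (s : C) (k : nat) : (k <= m)%N ->
  (k`! * (m - k)`! * (d - k)`!)%:R / (m`! * d`!)%:R * cc m d s k = s ^+ k.
Proof.
move=> hk; rewrite /cc.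
have H := congr1 (fun n : nat => n%:R : C) (key_nat m d k hk).
rewrite /= !natrM in H.
have F1 := fact_neq0 C m; have F2 := fact_neq0 C d; have F3 := fact_neq0 C (d - k).
rewrite !natrM.
transitivity (s ^+ k * ((k`!)%:R * ((m - k)`!)%:R * ((d - k)`!)%:R * (('C(m, k))%:R * (d`!)%:R))
   / ((m`!)%:R * (d`!)%:R * ((d - k)`!)%:R)).
  by field; rewrite ?F1 ?F2 ?F3.
by rewrite H; field; rewrite F1 F2 F3.
Qed.

Lemma T_iff (C : numClosedFieldType) (m d : nat) (p : {poly C}) (s : C) :
  (1 <= d)%N -> (d <= m)%N ->
  is_T_transform m d p (nseq d s) <->
  (forall k, (1 <= k <= d)%N -> pcoef d p k = cc m d s k).
Proof.
move=> hd hdm; rewrite /is_T_transform size_nseq.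
have dn0 : d%:R != 0 :> C by exact: natr_neq0.
have E i : d%:R^-1 * \sum_(x <- nseq d s) x ^+ i = s ^+ i.
  by rewrite big_nseq iter_addr_0 -mulr_natr; field.
split.
  move=> [_ h] k hk; have := h k hk; rewrite E => e.
  have hkm : (k <= m)%N by apply: leq_trans hdm; case/andP: hk.
  have g0 : (k`! * (m - k)`! * (d - k)`!)%:R / (m`! * d`!)%:R != 0 :> C.
    by rewrite mulf_neq0 ?invr_eq0 // natr_neq0 // ?muln_gt0 ?fact_gt0.
  apply: (mulfI g0); by rewrite -e gcc.
move=> h; split => // k hk; rewrite E h // gcc //.
by apply: leq_trans hdm; case/andP: hk.
Qed.
Definition ae (C : numClosedFieldType) (m d : nat) (p : {poly C}) (k : nat) : C :=
  (-1) ^+ k * ((m * d) ^ k)%:R * ((m - k)`! * (d - k)`!)%:R / (m`! * d`!)%:R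
   * pcoef d p k.
Definition AA (C : numClosedFieldType) (m d : nat) (s : C) (k : nat) : C :=
  (-1) ^+ k * ((m * d) ^ k)%:R * s ^+ k / (k`!)%:R.
Arguments ae {C}. Arguments AA {C}.

Lemma Epoly_coef (C : numClosedFieldType) (m d : nat) (p : {poly C}) k :
  (Epoly m d p)`_k = if (k < d.+1)%N then ae m d p k else 0.
Proof.
rewrite /Epoly -(poly_def d.+1 (fun i => (-1) ^+ i * ((m * d) ^ i)%:R * ((m - i)`! * (d - i)`!)%:R
      / (m`! * d`!)%:R * pcoef d p i)).
by rewrite coef_poly.
Qed.

Lemma h_cc (C : numClosedFieldType) (m d : nat) (s : C) (k : nat) : (k <= m)%N ->
  (-1) ^+ k * ((m * d) ^ k)%:R * ((m - k)`! * (d - k)`!)%:R / (m`! * d`!)%:R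
   * cc m d s k = AA m d s k.
Proof.
move=> hk; rewrite /cc /AA.
have H := congr1 (fun n : nat => n%:R : C) (key_nat m d k hk).
rewrite /= !natrM in H.
have F0 := fact_neq0 C k.
have F1 := fact_neq0 C m; have F2 := fact_neq0 C d; have F3 := fact_neq0 C (d - k).
rewrite !natrM.
transitivity ((-1) ^+ k * ((m * d) ^ k)%:R * s ^+ k * ((k`!)%:R * ((m - k)`!)%:R * ((d - k)`!)%:R * (('C(m, k))%:R * (d`!)%:R))
   / ((k`!)%:R * ((m`!)%:R * (d`!)%:R * ((d - k)`!)%:R))).
  by field; rewrite ?F0 ?F1 ?F2 ?F3.
by rewrite H; field; rewrite ?F0 ?F1 ?F2 ?F3.
Qed.

Lemma ae_iff (C : numClosedFieldType) (m d : nat) (p : {poly C}) (s : C) :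
  (1 <= d)%N -> (d <= m)%N ->
  (forall k, (k <= d)%N -> ae m d p k = AA m d s k) <->
  (forall k, (k <= d)%N -> pcoef d p k = cc m d s k).
Proof.
move=> hd hdm.
have hk0 k : (k <= d)%N -> (-1) ^+ k * ((m * d) ^ k)%:R * ((m - k)`! * (d - k)`!)%:R / (m`! * d`!)%:R != 0 :> C.
  move=> hk; rewrite !mulf_neq0 ?signr_eq0 ?invr_eq0 // natr_neq0 //.
  - by rewrite expn_gt0 muln_gt0 (leq_trans hd hdm) hd.
  - by rewrite muln_gt0 !fact_gt0.
  - by rewrite muln_gt0 !fact_gt0.
split=> h k hk.
  have hkm : (k <= m)%N := leq_trans hk hdm.
  apply: (mulfI (hk0 k hk)); by rewrite h_cc // -h.
by rewrite /ae h // h_cc // (leq_trans hk hdm).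
Qed.

Lemma R_coef0 (C : numClosedFieldType) (m d : nat) (p : {poly C}) (s : C) :
  ((m%:R * s *: 'X) * Epoly m d p + d%:R^-1 *: ('X * (Epoly m d p)^`()))`_0 = 0.
Proof. by rewrite coefD -scalerAl !coefZ !coefXM /= !mulr0 addr0. Qed.

Lemma R_coefS (C : numClosedFieldType) (m d : nat) (p : {poly C}) (s : C) j :
  ((m%:R * s *: 'X) * Epoly m d p + d%:R^-1 *: ('X * (Epoly m d p)^`()))`_j.+1
  = m%:R * s * (Epoly m d p)`_j + d%:R^-1 * ((Epoly m d p)`_j.+1 *+ j.+1).
Proof. by rewrite coefD -scalerAl !coefZ !coefXM /= coef_deriv. Qed.

Lemma AA_rec (C : numClosedFieldType) (m d : nat) (s : C) j : (0 < d)%N ->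
  m%:R * s * AA m d s j + d%:R^-1 * (AA m d s j.+1 *+ j.+1) = 0.
Proof.
move=> hd; rewrite /AA exprS expnS factS !natrM exprS -mulr_natr.
have F0 := fact_neq0 C j; have dn : d%:R != 0 :> C by exact: natr_neq0.
have jn : j.+1%:R != 0 :> C by exact: natr_neq0.
field; by rewrite F0 dn nat1r jn.
Qed.

Lemma R_iff (C : numClosedFieldType) (m d : nat) (p : {poly C}) (s : C) :
  (1 <= d)%N -> pcoef d p 0 = 1 ->
  is_finite_R m d p (m%:R * s *: 'X) <->
  (forall k, (k <= d)%N -> ae m d p k = AA m d s k).
Proof.
move=> hd hp0; rewrite /is_finite_R; split.
  move=> [_ h]; elim=> [|j IH] hj.
    rewrite /ae /AA hp0 !expr0 expn0 !mul1r !subn0 fact0 mulr1 mulfV ?invr1 //.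
    by rewrite natr_neq0 // muln_gt0 !fact_gt0.
  have := h j.+1 hj; rewrite R_coefS !Epoly_coef !ltnS (ltnW hj) hj.
  rewrite IH ?(ltnW hj) // -(AA_rec C m d s j hd) => /addrI /mulfI.
  rewrite invr_eq0 natr_neq0 // => /(_ isT) /pmulrnI; exact.
move=> h; split.
  by apply: leq_trans (size_scale_leq _ _) _; rewrite size_polyX.
case=> [|j] hj; first by rewrite R_coef0.
rewrite R_coefS !Epoly_coef !ltnS (ltnW hj) hj !h ?(ltnW hj) //.
exact: AA_rec.
Qed.

Definition qE (C : numClosedFieldType) (m d : nat) (s : C) (i : nat) : C :=
  'C(m, d - i)%:R * (-1) ^+ i / (i`!)%:R * s^-1 ^+ i.
Definition qq (C : numClosedFieldType) (m d : nat) (s : C) : {poly C} :=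
  \poly_(i < d.+1) @qE C m d s i.
Definition kap (C : numClosedFieldType) (d : nat) (s : C) : C :=
  (-1) ^+ d * (d`!)%:R * s ^+ d.
Arguments qE {C}. Arguments qq {C}. Arguments kap {C}.

Lemma qq_root (C : numClosedFieldType) (m d : nat) (s : C) (x : C) : (d <= m)%N ->
  root (qq m d s) x = root (laguerre C d (m - d)) (x / s).
Proof.
move=> hdm; rewrite /root /qq /laguerre horner_poly horner_sum.
rewrite subnKC //; congr (_ == 0); apply: eq_bigr => i _.
by rewrite hornerZ hornerXn /qE exprMn exprVn mulrAC mulrA.
Qed.

Lemma s_neq0 (C : numClosedFieldType) (s : C) : 0 < s -> s != 0.
Proof. by move=> h; rewrite gt_eqF. Qed.

Lemma coef_kq (C : numClosedFieldType) (m d : nat) (s : C) k : s != 0 -> (k <= d)%N ->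
  (-1) ^+ k * (kap d s *: qq m d s)`_(d - k) = cc m d s k.
Proof.
move=> s0 hk; rewrite coefZ /qq coef_poly ltnS leq_subr /qE /kap /cc subKn //.
have e1 : (-1) ^+ d = (-1) ^+ (d - k) * (-1) ^+ k :> C by rewrite -exprD subnK.
have e2 : s ^+ d = s ^+ (d - k) * s ^+ k by rewrite -exprD subnK.
rewrite e1 e2 exprVn.
have F := fact_neq0 C (d - k); have F2 := fact_neq0 C d.
have S : s ^+ (d - k) != 0 by rewrite expf_neq0.
rewrite -[(-1) ^+ k](signr_odd C) -[(-1) ^+ (d - k)](signr_odd C).
case: (odd k); case: (odd (d - k)); rewrite ?expr0 ?expr1 natrM;
  field; by rewrite ?F ?S.
Qed.

Lemma kq_iff (C : numClosedFieldType) (m d : nat) (p : {poly C}) (s : C) :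
  s != 0 -> size p = d.+1 ->
  (p = kap d s *: qq m d s <-> forall k, (k <= d)%N -> pcoef d p k = cc m d s k).
Proof.
move=> s0 sp; split.
  by move=> -> k hk; rewrite /pcoef coef_kq.
move=> h; apply/polyP => i.
case: (leqP i d) => hi.
  have := h (d - i)%N (leq_subr _ _); rewrite -(coef_kq C m d s (d - i)%N s0 (leq_subr i d)) /pcoef subKn //.
  by apply: mulfI; rewrite signr_eq0.
rewrite nth_default ?sp // nth_default //.
apply: leq_trans (size_scale_leq _ _) _; exact: leq_trans (size_poly _ _) hi.
Qed.

Lemma qq_coef (C : numClosedFieldType) (m d : nat) (s : C) i :
  (qq m d s)`_i = if (i < d.+1)%N then qE m d s i else 0.
Proof. by rewrite /qq coef_poly. Qed.

Lemma qE_rec (C : numClosedFieldType) (m d : nat) (s : C) j : s != 0 -> (d <= m)%N ->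
  (j < d)%N ->
  s * (j.+1)%:R * (j.+1 + (m - d))%N%:R * qE m d s j.+1 + (d%:R - j%:R) * qE m d s j = 0.
Proof.
move=> s0 hdm hj; rewrite /qE.
set n := (d - j.+1)%N.
have dj : (d - j = n.+1)%N by rewrite /n; lia.
have mn : (m - n = j.+1 + (m - d))%N by rewrite /n; lia.
have H := congr1 (fun x : nat => x%:R : C) (mul_bin_left m n).
rewrite /= !natrM mn in H.
rewrite dj -natrB ?(ltnW hj) // dj.
rewrite !exprS factS natrM.
have F := fact_neq0 C j.
have J : j.+1%:R != 0 :> C by exact: natr_neq0.
transitivity ((-1) ^+ j * s^-1 ^+ j / (j`!)%:R *
   ((n.+1)%:R * ('C(m, n.+1))%:R - (j.+1 + (m - d))%N%:R * ('C(m, n))%:R)).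
  field; by rewrite F s0 nat1r J.
by rewrite H subrr mulr0.
Qed.

Definition Lop (C : numClosedFieldType) (s : C) (y : {poly C}) (c e : C) : {poly C} :=
  s *: ('X * y^`()^`()) + (c%:P - 'X) * y^`() + e *: y.
Arguments Lop {C}.

Lemma Lop_coef (C : numClosedFieldType) (s : C) (y : {poly C}) (a : nat) (e : C) j :
  (Lop s y (s * a.+1%:R) e)`_j =
  s * (j.+1)%:R * (j.+1 + a)%N%:R * y`_j.+1 + (e - j%:R) * y`_j.
Proof.
rewrite /Lop mulrBl !(coefD, coefN, coefZ, coefCM, coefXM, coef_deriv).
case: j => [|j] /=; rewrite ?coef_deriv; ring.
Qed.

Lemma Lop_deriv (C : numClosedFieldType) (s : C) (y : {poly C}) (c e : C) :
  (Lop s y c e)^`() = Lop s y^`() (c + s) (e - 1).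
Proof.
rewrite /Lop !derivE -!mul_polyC polyCD polyCB polyC1; ring.
Qed.

Lemma ODEq (C : numClosedFieldType) (m d : nat) (s : C) : s != 0 -> (d <= m)%N ->
  Lop s (qq m d s) (s * (m - d).+1%:R) d%:R = 0.
Proof.
move=> s0 hdm; apply/polyP => j; rewrite Lop_coef coef0 !qq_coef.
case: (ltngtP j d) => hj.
- by rewrite !ltnS (ltnW hj) hj; apply: qE_rec.
- have h1 : (j.+1 < d.+1)%N = false by lia.
  have h2 : (j < d.+1)%N = false by lia.
  by rewrite h1 h2 !mulr0 addr0.
- by rewrite hj ltnn subrr !mulr0 mul0r addr0.
Qed.

Lemma ODEk (C : numClosedFieldType) (m d : nat) (s : C) k : s != 0 -> (d <= m)%N ->
  Lop s ((qq m d s)^`(k)) (s * (m - d + k).+1%:R) (d%:R - k%:R) = 0.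
Proof.
move=> s0 hdm; elim: k => [|k IH].
  by rewrite derivn0 addn0 subr0 ODEq.
have := congr1 (fun p => p^`()) IH; rewrite /= Lop_deriv deriv0 -derivnS.
have -> : s * (m - d + k).+1%:R + s = s * (m - d + k.+1).+1%:R.
  by rewrite addnS -[X in _ = _ * X]natr1 mulrDr mulr1.
by have -> : d%:R - k%:R - 1 = d%:R - k.+1%:R :> C by rewrite -natr1 opprD addrA.
Qed.

Lemma qEd_neq0 (C : numClosedFieldType) (m d : nat) (s : C) : s != 0 -> qE m d s d != 0.
Proof.
move=> s0; rewrite /qE subnn bin0 mul1r !mulf_neq0 ?signr_eq0 ?invr_eq0 ?fact_neq0 //.
by rewrite expf_neq0 // invr_eq0.
Qed.

Lemma qq_size (C : numClosedFieldType) (m d : nat) (s : C) : s != 0 ->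
  size (qq m d s) = d.+1.
Proof. by move=> s0; rewrite /qq size_poly_eq // qEd_neq0. Qed.

Lemma qq_derivd (C : numClosedFieldType) (m d : nat) (s : C) : s != 0 ->
  (qq m d s)^`(d) = ((qq m d s)`_d *+ d`!)%:P.
Proof.
move=> s0; apply/polyP => i; rewrite coef_derivn coefC.
case: i => [|i] /=; first by rewrite addn0 ffactnn.
by rewrite nth_default ?mul0rn // qq_size // addnS ltnS leq_addr.
Qed.

Lemma qq_simple (C : numClosedFieldType) (m d : nat) (s z : C) : 0 < s -> (d <= m)%N ->
  root (qq m d s) z -> root (qq m d s)^`() z -> False.
Proof.
move=> sp hdm r0 r1; have s0 : s != 0 by rewrite gt_eqF.
have z0 : z != 0.
  apply: contraTneq r0 => ->; rewrite /root horner_coef0 qq_coef ltnS leq0n /qE.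
  rewrite subn0 expr0 fact0 !mulr1 invr1 mulr1 natr_neq0 //.
  by rewrite bin_gt0.
have key : forall k, (k <= d)%N ->
    ((qq m d s)^`(k)).[z] = 0 /\ ((qq m d s)^`(k.+1)).[z] = 0.
  elim=> [|k IH] hk.
    by rewrite derivn0 derivn1; split; apply/eqP.
  have [h0 h1] := IH (ltnW hk); split => //.
  have := ODEk C m d s k s0 hdm; move/(congr1 (fun p => p.[z])).
  rewrite /Lop !hornerE -!derivnS h0 h1 !mulr0 !addr0.
  move/eqP; rewrite !mulf_eq0 (negbTE s0) (negbTE z0) /= => /eqP; exact.
have [h _] := key d (leqnn d).
move: h; rewrite qq_derivd // hornerC; apply/eqP.
by rewrite mulrn_eq0 negb_or -lt0n fact_gt0 qq_coef ltnSn qEd_neq0.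
Qed.

Lemma qq_sep (C : numClosedFieldType) (m d : nat) (s : C) : 0 < s -> (d <= m)%N ->
  separable_poly (qq m d s).
Proof.
move=> sp hdm; rewrite unlock.
case: (boolP (coprimep _ _)) => // nc; exfalso.
rewrite coprimep_def in nc.
have [z rz] := closed_rootP _ nc.
apply: (qq_simple C m d s z sp hdm).
  exact: root_dvdp (dvdp_gcdl _ _) rz.
exact: root_dvdp (dvdp_gcdr _ _) rz.
Qed.

Lemma kap_neq0 (C : numClosedFieldType) (d : nat) (s : C) : s != 0 -> kap d s != 0.
Proof. by move=> s0; rewrite /kap !mulf_neq0 ?signr_eq0 ?fact_neq0 ?expf_neq0. Qed.

Lemma kq_monic (C : numClosedFieldType) (m d : nat) (s : C) : s != 0 ->
  kap d s *: qq m d s \is monic.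
Proof.
move=> s0; rewrite monicE /lead_coef size_scale ?kap_neq0 // qq_size //=.
have := coef_kq C m d s 0 s0 (leq0n d); rewrite expr0 mul1r subn0 => ->.
by rewrite /cc expr0 mul1r bin0 mul1n subn0 mulfV ?fact_neq0.
Qed.

Lemma roots_iff (C : numClosedFieldType) (m d : nat) (s : C) (rs : seq C) :
  0 < s -> (d <= m)%N -> size rs = d ->
  (forall x, root (\prod_(r <- rs) ('X - r%:P)) x = root (laguerre C d (m - d)) (x / s))
  <-> \prod_(r <- rs) ('X - r%:P) = kap d s *: qq m d s.
Proof.
move=> sp hdm srs; have s0 : s != 0 by rewrite gt_eqF.
set p := \prod_(r <- rs) ('X - r%:P).
split; last first.
  by move=> -> x; rewrite rootZ ?kap_neq0 // qq_root.
move=> h.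
have h' x : root p x = root (qq m d s) x by rewrite h qq_root.
have [r qr] := closed_field_poly_normal (qq m d s).
set P := \prod_(z <- r) ('X - z%:P) in qr.
have lc0 : lead_coef (qq m d s) != 0.
  by rewrite lead_coef_eq0 -size_poly_eq0 qq_size.
have qP : qq m d s %= P by rewrite [X in X %= _]qr eqp_scale.
have ur : uniq r.
  by rewrite -separable_prod_XsubC -/P -(eqp_separable qP) qq_sep.
have sP : size P = d.+1.
  by rewrite -(qq_size C m d s s0) [in RHS]qr size_scale.
have rr : all (root p) r.
  apply/allP => z zr; rewrite h' qr rootZ // root_prod_XsubC //.
have Pp : P %| p by apply: uniq_roots_dvdp => //; rewrite uniq_rootsE.
have sp1 : size p = d.+1 by rewrite size_prod_XsubC srs.
have ePp : P %= p by rewrite -dvdp_size_eqp // sP sp1.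
apply/eqP; rewrite -eqp_monic ?monic_prod_XsubC ?kq_monic //.
apply: (@eqp_trans _ P); first by rewrite eqp_sym.
apply: (@eqp_trans _ (qq m d s)); first by rewrite eqp_sym.
by rewrite eqp_sym eqp_scale ?kap_neq0.
Qed.

Theorem mainTheorem9 (C : numClosedFieldType) (m d : nat) (p : {poly C})
    (sigma2 : C) :
  (1 <= d)%N -> (d <= m)%N ->
  (exists rs : seq C, size rs = d /\ all (fun r => 0 <= r) rs /\
     p = \prod_(r <- rs) ('X - r%:P)) ->
  0 < sigma2 ->
  [<-> is_T_transform m d p (nseq d sigma2);
       is_finite_R m d p (m%:R * sigma2 *: 'X);
       forall x : C, root p x = root (laguerre C d (m - d)) (x / sigma2)].
Proof.
move=> hd hdm [rs [srs [_ ep]]] sp.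
have s0 : sigma2 != 0 by rewrite gt_eqF.
have sp1 : size p = d.+1 by rewrite ep size_prod_XsubC srs.
have mp : p \is monic by rewrite ep monic_prod_XsubC.
have hp0 : pcoef d p 0 = 1.
  by rewrite /pcoef expr0 mul1r subn0 -(monicP mp) /lead_coef sp1.
have cc0 : cc m d sigma2 0 = 1.
  by rewrite /cc expr0 mul1r bin0 mul1n subn0 mulfV ?fact_neq0.
have E1 : is_T_transform m d p (nseq d sigma2) <->
    (forall k, (k <= d)%N -> pcoef d p k = cc m d sigma2 k).
  rewrite T_iff //; split=> h k hk; last by apply: h; case/andP: hk.
  by case: k hk => [|k] hk; [rewrite hp0 cc0 | apply: h].
have E2 : is_finite_R m d p (m%:R * sigma2 *: 'X) <->
    (forall k, (k <= d)%N -> pcoef d p k = cc m d sigma2 k).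
  by rewrite R_iff // ae_iff.
have E3 : (forall x : C, root p x = root (laguerre C d (m - d)) (x / sigma2)) <->
    (forall k, (k <= d)%N -> pcoef d p k = cc m d sigma2 k).
  rewrite -kq_iff // ep; exact: roots_iff.
tfae.
- by move/E1/E2.
- by move/E2/E3.
- by move/E3/E1.
Qed.
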